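(* Let $\Theta\subseteq\mathbb{R}^d$ and let $\{f_\theta:\theta\in\Theta\}$ be functions $[0,\infty)\times\mathbb{N}_0\to[0,\infty)$. Let $\theta_0\in\Theta$ and suppose there exist $\delta>0$, $C<\infty$, $\kappa_1,\kappa_2\ge0$ with $\kappa_1+\kappa_2<1$ such that for all $\theta'\in\Theta$ with $\|\theta'-\theta_0\|\le\delta$: (i) $|f_{\theta'}(\lambda,y)-f_{\theta_0}(\lambda,y)|\le C\|\theta'-\theta_0\|(\lambda+y+1)$ for all $\lambda\ge0$, $y\in\mathbb{N}_0$; (ii) $|f_{\theta'}(\lambda,y)-f_{\theta'}(\tilde\lambda,\tilde y)|\le\kappa_1|\lambda-\tilde\lambda|+\kappa_2|y-\tilde y|$ for all $\lambda,\tilde\lambda\ge0$, $y,\tilde y\in\mathbb{N}_0$. Let $((N_t,\lambda_t))_{t\in\mathbb{Z}}$ be a strictly stationary process with $N_t\mid\sigma(\lambda_s,N_s:s\le t-1)\sim\mathrm{Poisson}(\lambda_t)$ and $\lambda_t=f_{\theta_0}(\lambda_{t-1},N_{t-1})$. Let $\widehat\theta_n$ be estimators (based on $N_1,\dots,N_n$) with $\widehat\theta_n-\theta_0=O_P(n^{-1/2})$, let $\widehat\lambda_1\ge0$ be an arbitrary (random or non-random, almost surely finite) starting value, and define $\widehat\lambda_t=f_{\widehat\theta_n}(\widehat\lambda_{t-1},N_{t-1})$ for $t=2,\dots,n$. Then $$\sum_{t=1}^n(\lambda_t-\widehat\lambda_t)^2=O_P(1).$$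
   Context: $O_P(a_n)$: a sequence of random variables $X_n$ is $O_P(a_n)$ if $X_n/a_n$ is bounded in probability. *)

(* Defs.v *)
From HB Require Import structures.
From mathcomp Require Import all_boot all_order all_algebra.
From mathcomp Require Import all_classical all_reals all_analysis.
Set Implicit Arguments. Unset Strict Implicit. Unset Printing Implicit Defensive.
Import Order.TTheory GRing.Theory Num.Theory.
Local Open Scope classical_set_scope.
Local Open Scope ring_scope.

(* Poisson pmf  lam^k e^{-lam} / k!  (valid also for lam = 0: Poisson(0) = delta_0).
   (The library's poisson_pmf returns 1 for rate 0, so we do not use it.) *)
Definition pois_pmf {R : realType} (lam : R) (k : nat) : R :=
  lam ^+ k * (k`!%:R)^-1 * expR (- lam).

Definition enorm {R : realType} {d : nat} (v : 'rV[R]_d) : R :=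
  Num.sqrt (\sum_(i < d) v ord0 i ^+ 2).

(* Bounded in probability (eventually in n); probabilities of the events
   {M < |X_n|} are taken as outer probabilities (bounded by a measurable
   superset), so that no measurability of X_n is needed. *)
Definition bounded_in_prob {R : realType} {dT : measure_display}
  {T : measurableType dT} (P : probability T R) (X : nat -> T -> R) : Prop :=
  forall eps : R, 0 < eps -> exists M : R, exists n0 : nat,
    forall n : nat, (n0 <= n)%N ->
      exists A : set T, measurable A /\ [set w | M < `|X n w|] `<=` A /\
        (P A <= eps%:E)%E.

Definition OP {R : realType} {dT : measure_display} {T : measurableType dT}
  (P : probability T R) (X : nat -> T -> R) (a : nat -> R) : Prop :=
  bounded_in_prob P (fun n w => X n w / a n).

Definition past_sigma {R : realType} {dT : measure_display}
  {T : measurableType dT} (N : int -> T -> nat) (lam : int -> T -> R)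
  (t : int) : set (set T) :=
  <<s [set A | exists s : int, s <= t - 1 /\
        ((exists B : set R, measurable B /\ A = lam s @^-1` B) \/
         (exists C : set nat, A = N s @^-1` C))] >>.

(* Strict stationarity of ((N_t, lam_t))_t : all finite-dimensional
   distributions are shift invariant (tested on measurable rectangles,
   which generate the product sigma-algebra). *)
Definition strictly_stationary {R : realType} {dT : measure_display}
  {T : measurableType dT} (P : probability T R)
  (N : int -> T -> nat) (lam : int -> T -> R) : Prop :=
  forall (h : int) (k : nat) (ts : 'I_k -> int)
         (B : 'I_k -> set R) (C : 'I_k -> set nat),
    (forall i, measurable (B i)) ->
    P (\bigcap_(i in [set: 'I_k])
         [set w | B i (lam (ts i + h) w) /\ C i (N (ts i + h) w)]) =
    P (\bigcap_(i in [set: 'I_k])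
         [set w | B i (lam (ts i) w) /\ C i (N (ts i) w)]).

(* lamhat f th l1 Nn t = \hat\lambda_{t+1}, with \hat\lambda_1 = l1 and
   \hat\lambda_{s+1} = f_th(\hat\lambda_s, N_s). *)
Fixpoint lamhat {R : realType} {d : nat} (f : 'rV[R]_d -> R -> nat -> R)
  (th : 'rV[R]_d) (l1 : R) (Nn : nat -> nat) (t : nat) : R :=
  match t with
  | 0 => l1
  | t'.+1 => f th (lamhat f th l1 Nn t') (Nn t'.+1)
  end.

(* Main.v *)
Require Import Defs.
From HB Require Import structures.
From mathcomp Require Import all_boot all_order all_algebra.
From mathcomp Require Import all_classical all_reals all_analysis.
From mathcomp Require Import measurable_realfun.
From mathcomp Require Import ring lra.
Import Order.TTheory GRing.Theory Num.Theory.
Local Open Scope classical_set_scope.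
Local Open Scope ring_scope.

Local Open Scope ring_scope.

Lemma sum_exp_le (R : realType) (l : R) n : 0 <= l ->
  \sum_(j < n) l ^+ j / j`!%:R <= expR l.
Proof.
move=> l0.
have -> : \sum_(j < n) l ^+ j / j`!%:R = series (exp_coeff l) n.
  by rewrite /series /= -(big_mkord xpredT (fun j => l ^+ j / j`!%:R)).
apply: nondecreasing_cvgn_le; last exact: is_cvg_series_exp_coeff.
apply/nondecreasing_series => k _; rewrite /exp_coeff /=.
by rewrite divr_ge0 // exprn_ge0.
Qed.

Lemma sumsq_pois_aux (R : realType) (l : R) n :
  \sum_(k < n.+2) (k%:R ^+ 2 * (l ^+ k / k`!%:R)) =
  l ^+ 2 * \sum_(j < n) l ^+ j / j`!%:R + l * \sum_(j < n.+1) l ^+ j / j`!%:R.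
Proof.
elim: n => [|n IH].
  rewrite !big_ord_recr !big_ord0 /= !add0r.
  rewrite /= !factS /= fact0 !expr0n /= !mul0r add0r !expr1n expr0 expr1 !divr1 !mulr1 !mul1r.
  by rewrite mulr0 add0r.
rewrite big_ord_recr /= IH [in RHS]big_ord_recr [in X in _ = _ + X]big_ord_recr /=.
set a := \sum_(j < n) _.
set b := \sum_(j < n.+1) _.
rewrite !factS !natrM.
have h1 : (n`!%:R : R) != 0 by rewrite pnatr_eq0 -lt0n fact_gt0.
have h2 : (n.+1%:R : R) != 0 by rewrite pnatr_eq0.
have h3 : (n.+2%:R : R) != 0 by rewrite pnatr_eq0.
rewrite !exprS expr0.
have e2 : (n.+2%:R : R) = n.+1%:R + 1 by rewrite -natr1.
rewrite e2; rewrite e2 in h3.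
field.
apply/and3P; split => //; rewrite gt_eqF //; have := ler0n R n; lra.
Qed.

Lemma sumsq_pois_le (R : realType) (l : R) n : 0 <= l ->
  \sum_(k < n) k%:R ^+ 2 * pois_pmf l k <= l + l ^+ 2.
Proof.
move=> l0.
have F0 k : 0 <= k%:R ^+ 2 * pois_pmf l k.
  by rewrite /pois_pmf mulr_ge0 ?exprn_ge0 ?ler0n // !mulr_ge0 ?exprn_ge0 ?invr_ge0 ?ler0n ?expR_ge0.
apply: (@le_trans _ _ (\sum_(k < n.+2) k%:R ^+ 2 * pois_pmf l k)).
  rewrite (big_ord_widen n.+2 (fun k => k%:R ^+ 2 * pois_pmf l k) (leq_trans (leqnSn n) (leqnSn _))).
  rewrite big_mkcond /=; apply: ler_sum => i _; case: ifP => // _; exact: F0.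
have -> : \sum_(k < n.+2) k%:R ^+ 2 * pois_pmf l k =
    (\sum_(k < n.+2) (k%:R ^+ 2 * (l ^+ k / k`!%:R))) * expR (- l).
  rewrite mulr_suml; apply: eq_bigr => i _; rewrite /pois_pmf !mulrA.
  by [].
rewrite sumsq_pois_aux.
have ea := @sum_exp_le _ l n l0; have eb := @sum_exp_le _ l n.+1 l0.
have ep : 0 < expR (- l) by apply: expR_gt0.
have e1 : expR l * expR (- l) = 1 by apply: expRxMexpNx_1.
set a := \sum_(j < n) _ in ea *; set b := \sum_(j < n.+1) _ in eb *.
set E := expR l in ea eb e1 *; set E' := expR (- l) in ep e1 *.
have l2 : 0 <= l ^+ 2 by apply: exprn_ge0.
set L2 := l ^+ 2 in l2 *.
apply: (@le_trans _ _ ((L2 * E + l * E) * E')).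
  apply: ler_wpM2r; first exact: ltW.
  by apply: lerD; apply: ler_wpM2l.
by rewrite mulrDl -!mulrA e1 !mulr1 addrC.
Qed.

Lemma sumsq_rec (R : realType) (k : R) (d e : nat -> R) n : 0 <= k -> k < 1 ->
  (forall i, `|d i.+1| <= k * `|d i| + e i) -> (forall i, 0 <= e i) ->
  \sum_(i < n) d i ^+ 2 <= (d 0%N ^+ 2 + (1 - k)^-1 * \sum_(i < n) e i ^+ 2) / (1 - k).
Proof.
move=> k0 k1 hd he.
have k1' : 0 < 1 - k by rewrite subr_gt0.
set c := (1 - k)^-1.
have hc : c * (1 - k) = 1 by rewrite mulVf // gt_eqF.
have c0 : 0 < c by rewrite invr_gt0.
have step i : d i.+1 ^+ 2 <= k * d i ^+ 2 + c * e i ^+ 2.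
  have H := hd i; have a0 := normr_ge0 (d i.+1); have b0 := normr_ge0 (d i).
  have e0 := he i.
  have h1 : `|d i.+1| ^+ 2 <= (k * `|d i| + e i) ^+ 2.
    by rewrite !expr2; apply: ler_pM.
  rewrite -[d i.+1 ^+ 2]real_normK ?num_real // -[d i ^+ 2]real_normK ?num_real //.
  apply: (le_trans h1).
  have hh : 0 <= k * c * ((1 - k) * `|d i| - e i) ^+ 2.
    apply: mulr_ge0; last exact: sqr_ge0. apply: mulr_ge0 => //; exact: ltW.
  set a := `|d i| in b0 hh *; set ee := e i in e0 hh *.
  have id : k * a ^+ 2 + c * ee ^+ 2 - (k * a + ee) ^+ 2 = k * c * ((1 - k) * a - ee) ^+ 2.
    rewrite /c; field; rewrite subr_eq0; apply/eqP => k1e; move: k1; rewrite -k1e ltxx //.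
  by rewrite -subr_ge0 id.
set S := fun m => \sum_(i < m) d i ^+ 2.
set E := fun m => \sum_(i < m) e i ^+ 2.
have Sn : S n <= d 0%N ^+ 2 + k * S n + c * E n.
  case: n => [|m].
    rewrite /S /E !big_ord0 !mulr0 !addr0; exact: sqr_ge0.
  have hS : S m <= S m.+1.
    by rewrite /S big_ord_recr /= lerDl sqr_ge0.
  have hE : E m <= E m.+1.
    by rewrite /E big_ord_recr /= lerDl sqr_ge0.
  have : S m.+1 <= d 0%N ^+ 2 + k * S m + c * E m.
    rewrite /S big_ord_recl /= -addrA lerD2l /E mulr_sumr mulr_sumr -big_split /=.
    by apply: ler_sum => i _; exact: step.
  move=> H; apply: (le_trans H); rewrite -addrA -[leRHS]addrA lerD2l.
  apply: lerD; first exact: ler_wpM2l.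
  by apply: ler_wpM2l => //; exact: ltW.
rewrite ler_pdivlMr //.
rewrite -/(S n) -/(E n). nra.
Qed.

Lemma measurable_natfun d (T : measurableType d) (R : realType) (M : T -> nat) :
  (forall k, measurable (M @^-1` [set k])) -> measurable_fun setT (fun w => (M w)%:R : R).
Proof.
move=> hM _ B mB; rewrite setTI.
have -> : (fun w => (M w)%:R : R) @^-1` B =
    \bigcup_k (M @^-1` [set k] `&` [set _ | B k%:R]).
  apply/seteqP; split => [w /= Bw|w [k _ [/= <- //]]].
  by exists (M w) => //.
apply: bigcupT_measurable => k.
have [Bk|nBk] := pselect (B k%:R).
  by rewrite (_ : [set _ | B k%:R] = setT) ?setIT //; apply/seteqP; split.
by rewrite (_ : [set _ | B k%:R] = set0) ?setI0 //; apply/seteqP; split.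
Qed.

Lemma measurable_pois d (T : measurableType d) (R : realType) (L : T -> R) k :
  measurable_fun setT L -> measurable_fun setT (fun w => pois_pmf (L w) k).
Proof.
move=> mL; rewrite /pois_pmf.
apply: measurable_funM; first apply: measurable_funM.
- exact: measurable_funX.
- exact: measurable_cst.
- exact: (measurableT_comp (@measurable_expR R) (measurable_funN mL)).
Qed.

Lemma pois_ge0 (R : realType) (l : R) k : 0 <= l -> 0 <= pois_pmf l k.
Proof.
by move=> l0; rewrite /pois_pmf !mulr_ge0 ?exprn_ge0 ?invr_ge0 ?ler0n ?expR_ge0.
Qed.

Local Open Scope ereal_scope.

Lemma cond_sqmoment d (T : measurableType d) (R : realType) (P : probability T R)
  (M : T -> nat) (L : T -> R) (A : set T) :
  measurable A -> (forall k, measurable (M @^-1` [set k])) ->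
  measurable_fun setT L -> (forall w, (0 <= L w)%R) ->
  (forall k : nat, P (A `&` [set w | M w = k]) = \int[P]_(w in A) (pois_pmf (L w) k)%:E) ->
  \int[P]_(w in A) (((M w)%:R ^+ 2 : R)%:E) <= \int[P]_(w in A) ((L w + L w ^+ 2)%:E).
Proof.
move=> mA hM mL L0 hP.
have pw w : (((M w)%:R ^+ 2 : R)%:E) =
    \sum_(k <oo) (((k%:R ^+ 2 : R) * \1_(M @^-1` [set k]) w)%:E).
  rewrite (@nneseriesD1 R _ (M w)) //=.
  rewrite indicE mem_set // mulr1 eseries0 ?adde0 // => i _ iM.
  by rewrite indicE memNset ?mulr0 // => /= /eqP; rewrite eq_sym (negbTE iM).
under eq_integral => w _ do rewrite pw.
rewrite integral_nneseries //; last first.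
  move=> n; apply/measurable_EFinP; apply: measurable_funM.
    exact: measurable_cst.
  exact: measurable_indic.
have term n : \int[P]_(x in A) (((n%:R ^+ 2 : R) * \1_(M @^-1` [set n]) x)%:E) =
    \int[P]_(x in A) (((n%:R ^+ 2 : R) * pois_pmf (L x) n)%:E).
  rewrite (@integralZl_indic _ _ _ _ _ mA (fun _ => M @^-1` [set n])) //; last first.
    by move=> h; exfalso; move: h; apply/negP; rewrite -leNgt exprn_ge0 ?ler0n.
  rewrite integral_indic // setIC.
  have -> : A `&` M @^-1` [set n] = A `&` [set w | M w = n] by [].
  transitivity ((n%:R ^+ 2 : R)%:E * \int[P]_(x in A) (pois_pmf (L x) n)%:E); first by congr (_ * _); exact: hP.
  under [RHS]eq_integral do rewrite EFinM.
  rewrite ge0_integralZl_EFin //.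
  - by move=> x _; rewrite lee_fin pois_ge0.
  - apply/measurable_EFinP; apply: measurable_funTS; exact: measurable_pois.
under eq_eseriesr do rewrite term.
rewrite -integral_nneseries //; last 2 first.
- move=> n; apply/measurable_EFinP; apply: measurable_funM.
    exact: measurable_cst.
  apply: measurable_funTS; exact: measurable_pois.
- by move=> n x _; rewrite lee_fin mulr_ge0 ?exprn_ge0 ?ler0n ?pois_ge0.
apply: ge0_le_integral => //.
- by move=> x _; apply: nneseries_ge0 => n _ _; rewrite lee_fin mulr_ge0 ?exprn_ge0 ?ler0n ?pois_ge0.
- apply: ge0_emeasurable_sum.
    by move=> k x _ _; rewrite lee_fin mulr_ge0 ?exprn_ge0 ?ler0n ?pois_ge0.
  move=> k _; apply/measurable_EFinP; apply: measurable_funM.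
    exact: measurable_cst.
  apply: measurable_funTS; exact: measurable_pois.
- apply/measurable_EFinP; apply: measurable_funTS; apply: measurable_funD => //.
  exact: measurable_funX.
- move=> x _; apply: lime_le.
    by apply: is_cvg_nneseries => n _ _; rewrite lee_fin mulr_ge0 ?exprn_ge0 ?ler0n ?pois_ge0.
  apply: nearW => n /=.
  rewrite sumEFin lee_fin big_mkord; exact: sumsq_pois_le.
Qed.




Lemma tail_small d (T : measurableType d) (R : realType) (P : probability T R)
  (h : T -> R) : measurable_fun setT h -> forall eps : R, (0 < eps)%R ->
  exists M : R, P [set w | (M < h w)%R] <= eps%:E.
Proof.
move=> mh eps e0.
pose G n := [set w | ((n%:R : R) < h w)%R].
have mG n : measurable (G n).
  have -> : G n = setT `&` h @^-1` `]n%:R, +oo[%classic.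
    rewrite setTI; apply/seteqP; split => w /=; rewrite in_itv /= andbT //.
  by apply: mh => //; exact: measurable_itv.
have niG : nonincreasing_seq G.
  move=> n m nm; apply/subsetPset => w /= hw; apply: le_lt_trans hw; by rewrite ler_nat.
have capG : \bigcap_n G n = set0.
  apply/seteqP; split => w // hw.
  have [hw0|hw0] := leP 0%R (h w).
    have := hw (Num.Def.archi_bound (h w)) I; rewrite /G /=.
    by move/lt_trans => /(_ _ (archi_boundP hw0)); rewrite ltxx.
  by have := hw 0%N I; rewrite /G /= => /(lt_trans hw0); rewrite ltxx.
have cv := @nonincreasing_cvg_mu _ _ _ P G.
have PG0 : P (G 0%N) < +oo.
  by apply: (le_lt_trans (probability_le1 P (mG 0%N))); rewrite ltry.
have mcap : measurable (\bigcap_n G n) by rewrite capG.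
have := cv PG0 mG mcap niG.
rewrite capG measure0 => /fine_cvgP [_ /cvgr_lt /(_ (eps / 2)%R)].
move=> /(_ _) [|N _ HN]; first by rewrite divr_gt0.
exists N%:R; have := HN N (leqnn N); rewrite /= => hN.
rewrite -(@fineK _ (P (G N))); last first.
  rewrite (ge0_fin_numE (measure_ge0 P _)).
  by apply: (le_lt_trans (probability_le1 P (mG N))); rewrite ltry.
rewrite lee_fin; move: hN; rewrite /=; lra.
Qed.



Lemma markovA d (T : measurableType d) (R : realType) (P : probability T R)
  (A : set T) (X : T -> R) (c : R) : measurable A -> measurable_fun setT X ->
  (forall w, (0 <= X w)%R) -> (0 < c)%R ->
  P (A `&` [set w | (c < X w)%R]) <= (c^-1)%:E * \int[P]_(w in A) (X w)%:E.
Proof.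
move=> mA mX X0 c0.
have mS : measurable [set w | (c < X w)%R].
  have -> : [set w | (c < X w)%R] = setT `&` X @^-1` `]c, +oo[%classic.
    by rewrite setTI; apply/seteqP; split => w /=; rewrite in_itv /= andbT.
  by apply: mX => //; exact: measurable_itv.
have mAS : measurable (A `&` [set w | (c < X w)%R]) by exact: measurableI.
have H : c%:E * P (A `&` [set w | (c < X w)%R]) <= \int[P]_(w in A) (X w)%:E.
  rewrite -integral_cst //.
  apply: (@le_trans _ _ (\int[P]_(w in A `&` [set w | (c < X w)%R]) (X w)%:E)).
    apply: ge0_le_integral => //.
    - by move=> x _; rewrite lee_fin ltW.
    - by apply/measurable_EFinP; exact: measurable_funTS.
    - by move=> x [_ /= hx]; rewrite lee_fin ltW.
  apply: ge0_subset_integral => //.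
    by apply/measurable_EFinP; exact: measurable_funTS.
  by move=> x _; rewrite lee_fin.
rewrite [X in X <= _](_ : _ = (c^-1)%:E * (c%:E * P (A `&` [set w | (c < X w)%R]))); last first.
  by rewrite muleA -EFinM mulVf ?gt_eqF // mul1e.
by apply: lee_wpmul2l => //; rewrite lee_fin invr_ge0 ltW.
Qed.

Lemma intZ d (T : measurableType d) (R : realType) (P : probability T R)
  (A : set T) (al : R) (f : T -> R) : measurable A -> measurable_fun setT f ->
  (forall w, (0 <= f w)%R) -> (0 <= al)%R ->
  \int[P]_(w in A) ((al * f w)%R)%:E = al%:E * \int[P]_(w in A) (f w)%:E.
Proof.
move=> mA mf f0 a0; under eq_integral do rewrite EFinM.
rewrite ge0_integralZl_EFin //.
- by move=> x _; rewrite lee_fin.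
- by apply/measurable_EFinP; exact: measurable_funTS.
Qed.

Lemma int_cst_le d (T : measurableType d) (R : realType) (P : probability T R)
  (A : set T) (c : R) : measurable A -> (0 <= c)%R ->
  \int[P]_(w in A) c%:E <= c%:E.
Proof.
move=> mA c0; rewrite integral_cst //.
rewrite -[leRHS]mule1; apply: lee_wpmul2l; first by rewrite lee_fin.
exact: probability_le1.
Qed.

Lemma int_lin2 d (T : measurableType d) (R : realType) (P : probability T R)
  (A : set T) (c al : R) (f : T -> R) : measurable A -> measurable_fun setT f ->
  (forall w, (0 <= f w)%R) -> (0 <= c)%R -> (0 <= al)%R ->
  \int[P]_(w in A) ((c + al * f w)%R)%:E <= c%:E + al%:E * \int[P]_(w in A) (f w)%:E.
Proof.
move=> mA mf f0 c0 a0; under eq_integral do rewrite EFinD.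
rewrite ge0_integralD //.
- rewrite intZ //; apply: leeD2r; exact: int_cst_le.
- by move=> x _; rewrite lee_fin mulr_ge0.
- apply/measurable_EFinP; apply: measurable_funTS; apply: measurable_funM => //.
Qed.

Lemma moment_bound d (T : measurableType d) (R : realType) (P : probability T R)
  (A : set T) (lamn Nn : nat -> T -> R) (a k1 k2 K : R) :
  measurable A -> (0 <= a)%R -> (0 <= k1)%R -> (0 <= k2)%R -> (k1 + k2 < 1)%R ->
  (forall s, measurable_fun setT (lamn s)) -> (forall s, measurable_fun setT (Nn s)) ->
  (forall s w, (0 <= lamn s w)%R) -> (forall s w, (0 <= Nn s w)%R) ->
  (forall s w, (lamn s.+1 w <= a + k1 * lamn s w + k2 * Nn s w)%R) ->
  (forall w, A w -> (lamn 0%N w <= K)%R) ->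
  (forall s, \int[P]_(w in A) ((Nn s w ^+ 2)%R)%:E <=
             \int[P]_(w in A) ((lamn s w + lamn s w ^+ 2)%R)%:E) ->
  exists B : R, forall s,
    \int[P]_(w in A) (((lamn s w + Nn s w + 1) ^+ 2)%R)%:E <= B%:E.
Proof.
move=> mA a0 k10 k20 kk mlam mN lam0 N0 rec hK hcond.
set ka := (k1 + k2)%R.
have ka1 : (0 < 1 - ka)%R by rewrite subr_gt0.
set eta := ((1 - ka) / (2 * (k2 + 1)))%R.
have eta0 : (0 < eta)%R by rewrite divr_gt0 // mulr_gt0 // ltr_pwDr.
set b := ((4 * eta)^-1)%R.
have b0 : (0 <= b)%R by rewrite invr_ge0 mulr_ge0 // ltW.
have hb x : (x <= b + eta * x ^+ 2)%R.
  have e4 : (4 * eta * b = 1)%R by rewrite mulfV // gt_eqF // mulr_gt0.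
  have hh : (0 <= eta * (x - 2 * b) ^+ 2)%R by rewrite mulr_ge0 ?sqr_ge0 // ltW.
  have e4x : (4 * eta * b * x = x)%R by rewrite e4 mul1r.
  have e4b : (4 * eta * b * b = b)%R by rewrite e4 mul1r.
  nra.
set rho := (k1 + k2 * (1 + eta))%R.
have rho1 : (rho < 1)%R.
  have e : (eta * (k2 + 1) = (1 - ka) / 2)%R.
    rewrite /eta; field; rewrite gt_eqF //; lra.
  rewrite /rho /ka in e ka1 *; lra.
set c1 := (a ^+ 2 / (1 - ka))%R.
have c10 : (0 <= c1)%R by rewrite divr_ge0 ?sqr_ge0 // ltW.
have pw s w : (lamn s.+1 w ^+ 2 <= c1 + k1 * lamn s w ^+ 2 + k2 * Nn s w ^+ 2)%R.
  set l := lamn s w; set n := Nn s w.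
  have y0 : (0 <= lamn s.+1 w)%R := lam0 _ _.
  have hy := rec s w.
  have h1 : (lamn s.+1 w ^+ 2 <= (a + k1 * l + k2 * n) ^+ 2)%R.
    by rewrite !expr2; apply: ler_pM.
  apply: (le_trans h1).
  have id : (c1 + k1 * l ^+ 2 + k2 * n ^+ 2 - (a + k1 * l + k2 * n) ^+ 2 =
     (1 - ka) * k1 * (a / (1 - ka) - l) ^+ 2 + (1 - ka) * k2 * (a / (1 - ka) - n) ^+ 2
     + k1 * k2 * (l - n) ^+ 2)%R.
    rewrite /c1 /ka; field; exact: (lt0r_neq0 ka1).
  rewrite -subr_ge0 id.
  apply: addr_ge0; first apply: addr_ge0; apply: mulr_ge0; rewrite ?sqr_ge0 //; apply: mulr_ge0 => //; exact: ltW.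
have mEF (f : T -> R) : measurable_fun setT f ->
    measurable_fun A (fun w => (f w)%:E).
  by move=> mf; apply/measurable_EFinP; exact: measurable_funTS.
have mX2 (f : T -> R) : measurable_fun setT f -> measurable_fun setT (fun w => f w ^+ 2)%R.
  by move=> mf; exact: measurable_funX.
set C0 := (c1 + k2 * b)%R.
set B0 := (Num.max (K ^+ 2) (C0 / (1 - rho)))%R.
have rho0 : (0 <= rho)%R by rewrite /rho addr_ge0 // mulr_ge0 // addr_ge0 // ltW.
have mB s : \int[P]_(w in A) ((lamn s w ^+ 2)%R)%:E <= B0%:E.
  elim: s => [|s IH].
    apply: (@le_trans _ _ (\int[P]_(w in A) (K ^+ 2)%:E)).
      apply: ge0_le_integral => //.
      - by move=> x _; rewrite lee_fin sqr_ge0.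
      - exact/mEF/mX2.
      - by move=> x Ax; rewrite lee_fin !expr2; apply: ler_pM => //; apply: hK.
    apply: (le_trans (@int_cst_le _ _ _ P A _ mA (sqr_ge0 K))); rewrite lee_fin le_max lexx //.
  set ms := \int[P]_(w in A) _ in IH.
  have ms0 : 0 <= ms by apply: integral_ge0 => x _; rewrite lee_fin sqr_ge0.
  have : ms \is a fin_num by rewrite ge0_fin_numE // (le_lt_trans IH) ?ltry.
  move=> /fineK hr; set r := fine ms in hr.
  have rB : (r <= B0)%R by rewrite -lee_fin hr.
  have r0 : (0 <= r)%R by rewrite -lee_fin hr.
  have hN2 : \int[P]_(w in A) ((Nn s w ^+ 2)%R)%:E <= (b + (1 + eta) * r)%:E.
    apply: (le_trans (hcond s)).
    apply: (@le_trans _ _ (\int[P]_(w in A) ((b + (1 + eta) * lamn s w ^+ 2)%R)%:E)).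
      apply: ge0_le_integral => //.
      - by move=> x _; rewrite lee_fin addr_ge0 ?sqr_ge0.
      - apply/mEF/measurable_funD => //; exact: mX2.
      - apply/mEF/measurable_funD; first exact: measurable_cst.
        apply: measurable_funM; [exact: measurable_cst|exact: mX2].
      - move=> x _; rewrite lee_fin; have := hb (lamn s x); lra.
    have e1 : (0 <= 1 + eta)%R by rewrite addr_ge0 // ltW.
    apply: (le_trans (@int_lin2 _ _ _ P A b (1 + eta)%R (fun w => lamn s w ^+ 2)%R mA (mX2 _ (mlam s)) (fun w => sqr_ge0 _) b0 e1)).
    by rewrite [(_ + _ * r)%:E]EFinD [(_ * r)%:E]EFinM hr.
  apply: (@le_trans _ _ (\int[P]_(w in A) ((c1 + k1 * lamn s w ^+ 2)%R%:E + (k2 * Nn s w ^+ 2)%R%:E))).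
    apply: ge0_le_integral => //.
    - by move=> x _; rewrite lee_fin sqr_ge0.
    - exact/mEF/mX2.
    - apply: emeasurable_funD; apply/mEF.
        apply/measurable_funD; first exact: measurable_cst.
        apply: measurable_funM; [exact: measurable_cst|exact: mX2].
      apply: measurable_funM; [exact: measurable_cst|exact: mX2].
    - by move=> x _; rewrite -EFinD lee_fin pw.
  rewrite ge0_integralD //; last 4 first.
  - by move=> x _; rewrite lee_fin addr_ge0 // mulr_ge0 // sqr_ge0.
  - apply/mEF/measurable_funD; first exact: measurable_cst.
    apply: measurable_funM; [exact: measurable_cst|exact: mX2].
  - by move=> x _; rewrite lee_fin mulr_ge0 // sqr_ge0.
  - apply/mEF/measurable_funM; [exact: measurable_cst|exact: mX2].
  rewrite intZ //; last 2 first.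
  - exact: mX2.
  - by move=> w; rewrite sqr_ge0.
  apply: (le_trans (leeD (@int_lin2 _ _ _ P A c1 k1 (fun w => lamn s w ^+ 2)%R mA (mX2 _ (mlam s)) (fun w => sqr_ge0 _) c10 k10)
                         (lee_wpmul2l _ hN2))); first by rewrite lee_fin.
  rewrite (_ : \int[P]_(w in A) _ = r%:E); last by rewrite hr.
  rewrite -!EFinM -!EFinD lee_fin.
  have hB0 : (C0 / (1 - rho) <= B0)%R by rewrite le_max lexx orbT.
  have hB1 : (C0 <= (1 - rho) * B0)%R.
    by rewrite -ler_pdivrMl ?subr_gt0 // mulrC.
  have hh : (0 <= rho * (B0 - r))%R by rewrite mulr_ge0 // subr_ge0.
  rewrite /C0 /rho in hB1 hh *; nra.
exists (6 + 9 * B0)%R => s.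
have IH := mB s.
set ms := \int[P]_(w in A) _ in IH.
have ms0 : 0 <= ms by apply: integral_ge0 => x _; rewrite lee_fin sqr_ge0.
have : ms \is a fin_num by rewrite ge0_fin_numE // (le_lt_trans IH) ?ltry.
move=> /fineK hr; set r := fine ms in hr.
have rB : (r <= B0)%R by rewrite -lee_fin hr.
have r0 : (0 <= r)%R by rewrite -lee_fin hr.
have hN2 : \int[P]_(w in A) ((Nn s w ^+ 2)%R)%:E <= (1 + 2 * r)%:E.
  apply: (le_trans (hcond s)).
  apply: (@le_trans _ _ (\int[P]_(w in A) ((1 + 2 * lamn s w ^+ 2)%R)%:E)).
    apply: ge0_le_integral => //.
    - by move=> x _; rewrite lee_fin addr_ge0 ?sqr_ge0.
    - apply/mEF/measurable_funD => //; exact: mX2.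
    - apply/mEF/measurable_funD; first exact: measurable_cst.
      apply: measurable_funM; [exact: measurable_cst|exact: mX2].
    - move=> x _; rewrite lee_fin; have := sqr_ge0 (lamn s x - 1); nra.
  apply: (le_trans (@int_lin2 _ _ _ P A 1 2 (fun w => lamn s w ^+ 2)%R mA (mX2 _ (mlam s)) (fun w => sqr_ge0 _) ler01 (ler0n _ 2))).
  by rewrite [(_ + _ * r)%:E]EFinD [(_ * r)%:E]EFinM hr.
apply: (@le_trans _ _ (\int[P]_(w in A) ((3 + 3 * lamn s w ^+ 2)%R%:E + (3 * Nn s w ^+ 2)%R%:E))).
  apply: ge0_le_integral => //.
  - by move=> x _; rewrite lee_fin sqr_ge0.
  - apply/mEF/mX2; apply: measurable_funD => //; apply: measurable_funD => //.
  - apply: emeasurable_funD; apply/mEF.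
      apply/measurable_funD; first exact: measurable_cst.
      apply: measurable_funM; [exact: measurable_cst|exact: mX2].
    apply: measurable_funM; [exact: measurable_cst|exact: mX2].
  - move=> x _; rewrite -EFinD lee_fin.
    have := sqr_ge0 (lamn s x - Nn s x); have := sqr_ge0 (lamn s x - 1).
    have := sqr_ge0 (Nn s x - 1); nra.
rewrite ge0_integralD //; last 4 first.
- by move=> x _; rewrite lee_fin addr_ge0 // mulr_ge0 // sqr_ge0.
- apply/mEF/measurable_funD; first exact: measurable_cst.
  apply: measurable_funM; [exact: measurable_cst|exact: mX2].
- by move=> x _; rewrite lee_fin mulr_ge0 // sqr_ge0.
- apply/mEF/measurable_funM; [exact: measurable_cst|exact: mX2].
rewrite intZ //; last 2 first.
- exact: mX2.
- by move=> w; rewrite sqr_ge0.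
apply: (le_trans (leeD (@int_lin2 _ _ _ P A 3 3 (fun w => lamn s w ^+ 2)%R mA (mX2 _ (mlam s)) (fun w => sqr_ge0 _) (ler0n _ 3) (ler0n _ 3))
                       (lee_wpmul2l _ hN2))); first by rewrite lee_fin.
rewrite (_ : \int[P]_(w in A) _ = r%:E); last by rewrite hr.
rewrite -!EFinM -!EFinD lee_fin.
nra.
Qed.

Local Close Scope ereal_scope.

Lemma lamhat_ge0 (R : realType) (d : nat) (Theta : set 'rV[R]_d)
  (f : 'rV[R]_d -> R -> nat -> R) th l1 Nn :
  (forall th l y, Theta th -> 0 <= l -> 0 <= f th l y) -> Theta th -> 0 <= l1 ->
  forall t, 0 <= lamhat f th l1 Nn t.
Proof. by move=> hf hth l10; elim => [|t IH] //=; apply: hf. Qed.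

Lemma enorm0 (R : realType) (d : nat) : enorm (0 : 'rV[R]_d) = 0.
Proof.
rewrite /enorm big1 ?sqrtr0 // => i _; by rewrite mxE expr0n.
Qed.

Lemma enorm_ge0 (R : realType) (d : nat) (v : 'rV[R]_d) : 0 <= enorm v.
Proof. exact: sqrtr_ge0. Qed.

Lemma PoszS1 (s : nat) : (Posz s.+1 - 1 = Posz s)%R.
Proof. by rewrite -addn1 PoszD addrK. Qed.

Lemma past_sigmaI {R : realType} {dT : measure_display}
  {T : measurableType dT} (N : int -> T -> nat) (lam : int -> T -> R) t A B :
  past_sigma N lam t A -> past_sigma N lam t B -> past_sigma N lam t (A `&` B).
Proof.
move=> hA hB.
exact: (@measurableI _ (g_sigma_algebraType _) A B hA hB).
Qed.

Lemma meas_le d (T : measurableType d) (R : realType) (g : T -> R) (K : R) :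
  measurable_fun setT g -> measurable [set w | g w <= K].
Proof.
move=> mg; have -> : [set w | g w <= K] = setT `&` g @^-1` `]-oo, K]%classic.
  by rewrite setTI; apply/seteqP; split => w /=; rewrite in_itv /=.
by apply: mg => //; exact: measurable_itv.
Qed.

Lemma meas_lt d (T : measurableType d) (R : realType) (g : T -> R) (K : R) :
  measurable_fun setT g -> measurable [set w | K < g w].
Proof.
move=> mg; have -> : [set w | K < g w] = setT `&` g @^-1` `]K, +oo[%classic.
  by rewrite setTI; apply/seteqP; split => w /=; rewrite in_itv /= andbT.
by apply: mg => //; exact: measurable_itv.
Qed.

Theorem lemma4p3 (R : realType) (d : nat) (Theta : set 'rV[R]_d)
  (f : 'rV[R]_d -> R -> nat -> R) (theta0 : 'rV[R]_d)
  (delta C kappa1 kappa2 : R)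
  (dT : measure_display) (T : measurableType dT) (P : probability T R)
  (N : int -> T -> nat) (lam : int -> T -> R)
  (thetahat : nat -> T -> 'rV[R]_d) (lamhat1 : T -> R) :
  (* f_theta : [0,oo) x N_0 -> [0,oo) for theta in Theta *)
  (forall th l y, Theta th -> 0 <= l -> 0 <= f th l y) ->
  Theta theta0 ->
  0 < delta -> 0 <= kappa1 -> 0 <= kappa2 -> kappa1 + kappa2 < 1 ->
  (* (i) *)
  (forall th, Theta th -> enorm (th - theta0) <= delta ->
     forall l y, 0 <= l ->
       `|f th l y - f theta0 l y| <= C * enorm (th - theta0) * (l + y%:R + 1)) ->
  (* (ii) *)
  (forall th, Theta th -> enorm (th - theta0) <= delta ->
     forall l l' y y', 0 <= l -> 0 <= l' ->
       `|f th l y - f th l' y'| <= kappa1 * `|l - l'| + kappa2 * `|y%:R - y'%:R|) ->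
  (* the process *)
  (forall t, measurable_fun setT (lam t)) ->
  (forall t (k : nat), measurable (N t @^-1` [set k])) ->
  (forall t w, 0 <= lam t w) ->
  strictly_stationary P N lam ->
  (forall t A, past_sigma N lam t A -> forall k : nat,
     P (A `&` [set w | N t w = k]) =
     (\int[P]_(w in A) (pois_pmf (lam t w) k)%:E)%E) ->
  (forall t w, lam t w = f theta0 (lam (t - 1) w) (N (t - 1) w)) ->
  (* estimators based on N_1, ..., N_n, with values in Theta *)
  (forall n (i : 'I_d), measurable_fun setT (fun w => thetahat n w ord0 i)) ->
  (forall n w, Theta (thetahat n w)) ->
  (forall n w w', (forall t : nat, (1 <= t <= n)%N -> N (Posz t) w = N (Posz t) w') ->
     thetahat n w = thetahat n w') ->
  OP P (fun n w => enorm (thetahat n w - theta0)) (fun n => (Num.sqrt n%:R)^-1) ->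
  (* starting value *)
  measurable_fun setT lamhat1 ->
  (forall w, 0 <= lamhat1 w) ->
  OP P (fun n w => \sum_(i < n)
          (lam (Posz i.+1) w -
           lamhat f (thetahat n w) (lamhat1 w) (fun s => N (Posz s) w) i) ^+ 2)
     (fun _ => 1).
Proof.
move=> hf0 hth0 d0 k10 k20 kk hi hii mlam mN lam0 stat hpois hrec mth hTheta hmeasN hOP mlh1 lh10.
move=> eps e0.
have e4 : 0 < eps / 4 by rewrite divr_gt0.
have k1lt : kappa1 < 1 by lra.
set a := f theta0 0 0%N.
have hii0 : forall l l' y y', 0 <= l -> 0 <= l' -> `|f theta0 l y - f theta0 l' y'| <= kappa1 * `|l - l'| + kappa2 * `|y%:R - y'%:R|.
  by apply: hii => //; rewrite subrr enorm0 ltW.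
have a0 : 0 <= a := hf0 _ _ _ hth0 (lexx 0).
have recb l y : 0 <= l -> f theta0 l y <= a + kappa1 * l + kappa2 * y%:R.
  move=> l0; have h := hii0 l 0 y 0%N l0 (lexx 0).
  rewrite ?mulr0n !subr0 (ger0_norm l0) (ger0_norm (ler0n _ _)) in h.
  have := ler_norm (f theta0 l y - a); rewrite /a in h *; lra.
have mN' t : measurable_fun setT (fun w => (N t w)%:R : R) by apply: measurable_natfun; exact: mN.
have [K hK] := @tail_small _ _ _ P (fun w => lam 0 w + (N 0 w)%:R)
   (measurable_funD (mlam 0) (mN' 0)) _ e4.
set A := [set w | lam 0 w <= K] `&` [set w | (N 0 w)%:R <= K].
have mA : measurable A by apply: measurableI; apply: meas_le.
have pastA s : past_sigma N lam (Posz s.+1) A.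
  apply: past_sigmaI; apply: sub_sigma_algebra; exists 0; rewrite PoszS1; split => //.
    left; exists `]-oo, K]%classic; split; first exact: measurable_itv.
    by apply/seteqP; split => w /=; rewrite in_itv /=.
  by right; exists [set k | (k%:R : R) <= K].
have lamn_rec s w : lam (Posz s.+2) w <= a + kappa1 * lam (Posz s.+1) w + kappa2 * (N (Posz s.+1) w)%:R.
  by rewrite hrec PoszS1; apply: recb.
have lam1A w : A w -> lam (Posz 1) w <= a + kappa1 * K + kappa2 * K.
  move=> [/= h1 h2]; rewrite hrec (PoszS1 0); apply: (le_trans (recb _ _ (lam0 _ _))).
  by rewrite -addrA -addrA lerD2l; apply: lerD; apply: ler_wpM2l.
have hcond s : (\int[P]_(w in A) ((((N (Posz s.+1) w)%:R : R) ^+ 2)%:E) <=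
    \int[P]_(w in A) ((lam (Posz s.+1) w + lam (Posz s.+1) w ^+ 2)%:E))%E.
  apply: cond_sqmoment => //.
  by move=> k; exact: (hpois _ _ (pastA s)).
have [B hB] := @moment_bound _ _ _ P A (fun s => lam (Posz s.+1)) (fun s w => (N (Posz s.+1) w)%:R)
  a kappa1 kappa2 (a + kappa1 * K + kappa2 * K) mA a0 k10 k20 kk (fun s => mlam _) (fun s => mN' _)
  (fun s w => lam0 _ _) (fun s w => ler0n _ _) lamn_rec lam1A hcond.
have mD1 : measurable_fun setT (fun w => `|lam 1 w - lamhat1 w|).
  exact: measurableT_comp (@normr_measurable R setT) (measurable_funB (mlam 1) mlh1).
have [M2 hM2] := @tail_small _ _ _ P (fun w => `|lam 1 w - lamhat1 w|) mD1 _ e4.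
have [M1 [n1 hn1]] := hOP (eps / 4) e4.
set Bp := Num.max B 0.
have Bp0 : 0 <= Bp by rewrite le_max lexx orbT.
have BBp : B <= Bp by rewrite le_max lexx.
set L := 4 * Bp / eps + 1.
have L0 : 0 < L by rewrite ltr_wpDl // divr_ge0 // ?mulr_ge0 // ltW.
set c := (1 - kappa1)^-1.
set Mfin := (M2 ^+ 2 + c * (C ^+ 2 * M1 ^+ 2 * L)) * c.
exists Mfin, (maxn n1 (Num.truncn (M1 ^+ 2 / delta ^+ 2)).+1).
move=> n; rewrite geq_max => /andP[hnn1 hnt].
have npos : (0 < n)%N by apply: leq_trans hnt.
have [A1 [mA1 [sA1 pA1]]] := hn1 n hnn1.
set X := fun w => \sum_(i < n) (lam (Posz i.+1) w + (N (Posz i.+1) w)%:R + 1) ^+ 2.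
have mX : measurable_fun setT X.
  apply: measurable_sum => i; apply: measurable_funX; apply: measurable_funD => //.
  exact: measurable_funD.
have X0 w : 0 <= X w by apply: sumr_ge0 => i _; exact: sqr_ge0.
set S1 := [set w | K < lam 0 w + (N 0 w)%:R].
set S2 := [set w | M2 < `|lam 1 w - lamhat1 w|].
set S3 := A `&` [set w | n%:R * L < X w].
have mS1 : measurable S1 by apply: meas_lt; exact: measurable_funD.
have mS2 : measurable S2 by apply: meas_lt.
have mS3 : measurable S3 by apply: measurableI => //; exact: meas_lt.
have nL0 : 0 < n%:R * L by rewrite mulr_gt0 // ltr0n.
have pS3 : (P S3 <= (eps / 4)%:E)%E.
  apply: (le_trans (@markovA _ _ _ P A X (n%:R * L) mA mX X0 nL0)).
  have hint : (\int[P]_(w in A) (X w)%:E <= (n%:R * B)%:E)%E.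
    rewrite /X; under eq_integral do rewrite -sumEFin.
    rewrite ge0_integral_sum //; last 2 first.
    - move=> i; apply/measurable_EFinP; apply: measurable_funTS.
      apply: measurable_funX; apply: measurable_funD => //; exact: measurable_funD.
    - by move=> i x _; rewrite lee_fin sqr_ge0.
    apply: (@le_trans _ _ (\sum_(i < n) B%:E)%E).
      by apply: lee_sum => i _; exact: hB.
    by rewrite sumEFin sumr_const card_ord mulr_natl.
  apply: (le_trans (lee_wpmul2l _ hint)); first by rewrite lee_fin invr_ge0 ltW.
  rewrite -EFinM lee_fin.
  have nz : (n%:R : R) != 0 by rewrite pnatr_eq0 -lt0n.
  have -> : (n%:R * L)^-1 * (n%:R * B) = B / L.
    by field; rewrite nz gt_eqF.
  rewrite ler_pdivrMr //.
  have -> : eps / 4 * L = Bp + eps / 4.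
    by rewrite /L; field; rewrite gt_eqF.
  lra.
exists (A1 `|` S1 `|` S2 `|` S3); split.
  by apply: measurableU => //; apply: measurableU => //; apply: measurableU.
split; last first.
  apply: (le_trans (measureU2 _ _ _)) => //; first by apply: measurableU => //; apply: measurableU.
  apply: (@le_trans _ _ ((P A1 + P S1 + P S2) + P S3)%E).
    apply: leeD => //; apply: (le_trans (measureU2 _ _ _)) => //; first exact: measurableU.
    by apply: leeD => //; exact: measureU2.
  apply: (le_trans (leeD (leeD (leeD pA1 hK) hM2) pS3)).
  by rewrite -!EFinD lee_fin; lra.
move=> w /= hw.
have [//|Hout] := pselect ((A1 `|` S1 `|` S2 `|` S3) w).
exfalso; move: hw; apply/negP; rewrite -leNgt divr1.
have nA1 : ~ A1 w by move=> h; apply: Hout; left; left; left.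
have nS1 : ~ S1 w by move=> h; apply: Hout; left; left; right.
have nS2 : ~ S2 w by move=> h; apply: Hout; left; right.
have nS3 : ~ S3 w by move=> h; apply: Hout; right.
set th := thetahat n w.
set eo := enorm (th - theta0).
have eo0 : 0 <= eo by exact: enorm_ge0.
have sq0 : 0 < Num.sqrt (n%:R : R) by rewrite sqrtr_gt0 ltr0n.
have heo : eo * Num.sqrt (n%:R : R) <= M1.
  rewrite leNgt; apply/negP => h; apply: nA1; apply: sA1 => /=.
  by rewrite invrK ger0_norm // mulr_ge0 // ltW.
have eosq : eo ^+ 2 * n%:R <= M1 ^+ 2.
  have h2 : (eo * Num.sqrt (n%:R : R)) ^+ 2 <= M1 ^+ 2.
    by rewrite !expr2; apply: ler_pM => //; rewrite mulr_ge0 // ltW.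
  by move: h2; rewrite exprMn (@sqr_sqrtr _ (n%:R)) ?ler0n.
have hnx : M1 ^+ 2 / delta ^+ 2 < n%:R.
  apply: (lt_le_trans (truncnS_gt _)); by rewrite ler_nat.
have eod : eo <= delta.
  have d2 : 0 < delta ^+ 2 by rewrite exprn_gt0.
  move: hnx; rewrite ltr_pdivrMr // => hnx.
  have np : (0 : R) < n%:R by rewrite ltr0n.
  have : eo ^+ 2 < delta ^+ 2.
    rewrite -(ltr_pM2r np); apply: le_lt_trans eosq _; by rewrite mulrC.
  by move=> h; rewrite leNgt; apply/negP => h'; move: h; apply/negP; rewrite -leNgt;
     rewrite !expr2; apply: ler_pM => //; [exact: ltW|exact: ltW|exact: ltW|exact: ltW].
have inA : A w.
  have h : lam 0 w + (N 0 w)%:R <= K by rewrite leNgt; apply/negP.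
  have := lam0 0 w; have := ler0n R (N 0 w).
  by split => /=; lra.
have Xle : X w <= n%:R * L by rewrite leNgt; apply/negP => h; apply: nS3.
have D1 : `|lam 1 w - lamhat1 w| <= M2 by rewrite leNgt; apply/negP.
have thT : Theta th by exact: hTheta.
set Nw := fun s : nat => N (Posz s) w.
set lh := lamhat f th (lamhat1 w) Nw.
have lh0 t : 0 <= lh t by exact: (@lamhat_ge0 _ _ Theta f th (lamhat1 w) Nw hf0 thT (lh10 w) t).
set dd := fun i : nat => lam (Posz i.+1) w - lh i.
set ee := fun i : nat => `|C| * eo * (lam (Posz i.+1) w + (N (Posz i.+1) w)%:R + 1).
have ee0 i : 0 <= ee i.
  by rewrite /ee !mulr_ge0 // addr_ge0 // addr_ge0 // ler0n.
have drec i : `|dd i.+1| <= kappa1 * `|dd i| + ee i.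
  rewrite /dd /lh /= -/lh.
  rewrite hrec PoszS1.
  set l := lam (Posz i.+1) w; set y := N (Posz i.+1) w.
  have hl : 0 <= l := lam0 _ _.
  have h1 := hi th thT eod l y hl.
  have h2 := hii th thT eod l (lh i) y y hl (lh0 i).
  rewrite subrr normr0 mulr0 addr0 in h2.
  have tri : `|f theta0 l y - f th (lh i) y| <=
      `|f th l y - f theta0 l y| + `|f th l y - f th (lh i) y|.
    rewrite (_ : f theta0 l y - f th (lh i) y =
        - (f th l y - f theta0 l y) + (f th l y - f th (lh i) y)); last by ring.
    by apply: (le_trans (ler_normD _ _)); rewrite normrN.
  apply: (le_trans tri); rewrite addrC; apply: lerD => //.
  apply: (le_trans h1); rewrite /ee -/eo -/l -/y.
  apply: ler_wpM2r; first by rewrite addr_ge0 // addr_ge0 // ler0n.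
  by apply: ler_wpM2r => //; exact: ler_norm.
have hsum := @sumsq_rec R kappa1 dd ee n k10 k1lt drec ee0.
have c0 : 0 <= c by rewrite invr_ge0 subr_ge0 ltW.
rewrite ger0_norm; last by apply: sumr_ge0 => i _; exact: sqr_ge0.
apply: (le_trans hsum); rewrite -/c /Mfin.
have hd0 : dd 0%N ^+ 2 <= M2 ^+ 2.
  rewrite -real_normK ?num_real // !expr2.
  have hM20 : 0 <= M2 by apply: le_trans D1.
  by apply: ler_pM => //; exact: D1.
have es : \sum_(i < n) ee i ^+ 2 <= C ^+ 2 * M1 ^+ 2 * L.
  have -> : \sum_(i < n) ee i ^+ 2 = C ^+ 2 * eo ^+ 2 * X w.
    rewrite /X mulr_sumr; apply: eq_bigr => i _.
    by rewrite /ee !exprMn real_normK ?num_real.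
  have hC : 0 <= C ^+ 2 by exact: sqr_ge0.
  rewrite -[C ^+ 2 * eo ^+ 2 * X w]mulrA -[C ^+ 2 * M1 ^+ 2 * L]mulrA.
  apply: ler_wpM2l => //.
  apply: (@le_trans _ _ (eo ^+ 2 * (n%:R * L))).
    by apply: ler_wpM2l => //; exact: sqr_ge0.
  by rewrite mulrA; apply: ler_wpM2r => //; exact: ltW.
apply: ler_wpM2r => //; apply: lerD => //; exact: ler_wpM2l.
Qed.
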